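(* Let $F$ be a Gårding–Dirichlet polynomial of degree $M$ on $\mathrm{Sym}^2(\mathbb{R}^n)$ with $I$-eigenvalues $\lambda^F(A)=(\lambda^F_1(A),\dots,\lambda^F_M(A))$, defined by $F(tI+A)=F(I)\prod_{j=1}^M(t+\lambda^F_j(A))$. Let $p$ be a universal G-D polynomial of degree $N$ in $M$ variables, with $e$-eigenvalues $\Lambda_1(\lambda),\dots,\Lambda_N(\lambda)$ defined by $p(te+\lambda)=p(e)\prod_{j=1}^N(t+\Lambda_j(\lambda))$, and Gårding cone $\Gamma_p$. Define $P_F(A)=p(\lambda^F(A))$ for $A\in\mathrm{Sym}^2(\mathbb{R}^n)$. Then $P_F$ is a Gårding–Dirichlet polynomial of degree $N$ on $\mathrm{Sym}^2(\mathbb{R}^n)$ whose $I$-eigenvalues are $\lambda^{P_F}_j(A)=\Lambda_j(\lambda^F(A))$, $j=1,\dots,N$, and whose Gårding cone is $\Gamma_{P_F}=(\lambda^F)^{-1}(\Gamma_p)$. Moreover, if $F$ is real invariant, so is $P_F$.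
   Context: $\mathrm{Sym}^2(\mathbb{R}^n)$ is the space of real symmetric $n\times n$ matrices. A Gårding–Dirichlet (G-D) polynomial of degree $N$ on $\mathrm{Sym}^2(\mathbb{R}^n)$ is a real homogeneous polynomial $F$ of degree $N$ with $F(I)>0$ such that for every $A$ the polynomial $t\mapsto F(tI+A)$ has only real roots, and whose Gårding cone $\Gamma$ — the connected component of $\{A: F(A)\ne 0\}$ containing $I$ — contains all positive definite matrices. Real invariant means $F(gAg^t)=F(A)$ for all $g\in O(n)$. A universal G-D polynomial in $M$ variables is a symmetric homogeneous real polynomial $p$ on $\mathbb{R}^M$ with $p(e)>0$ ($e=(1,\dots,1)$), all coefficients $\ge0$, $\partial p/\partial\lambda_j(e)=k>0$ independent of $j$, which is Gårding hyperbolic with respect to $e$ ($t\mapsto p(te+\lambda)$ has only real roots for all $\lambda$); its Gårding cone $\Gamma_p$ is the connected component of $\{p\neq0\}$ containing $e$. *)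

(* Defs.v *)
From HB Require Import structures.
From mathcomp Require Import all_boot all_order all_algebra.
From mathcomp Require Import mpoly.
From mathcomp Require Import boolp classical_sets reals topology normedtype.
From mathcomp Require Import matrix_topology.

Set Implicit Arguments.
Unset Strict Implicit.
Unset Printing Implicit Defensive.

Import Order.TTheory GRing.Theory Num.Theory.
Import numFieldNormedType.Exports.
Local Open Scope ring_scope.
Local Open Scope classical_set_scope.

Section GardingDirichlet.
Variable R : realType.

Definition symmx {n} (A : 'M[R]_n) : Prop := A^T = A.

Definition posdef {n} (A : 'M[R]_n) : Prop :=
  symmx A /\ forall v : 'rV[R]_n, v != 0 -> 0 < (v *m A *m v^T) 0 0.

Definition mx_eval {n} (q : mpoly.mpoly (n * n) R) (A : 'M[R]_n) : R :=
  mpoly.meval (fun i => mxvec A 0 i) q.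

Definition rv_eval {M} (p : mpoly.mpoly M R) (v : 'rV[R]_M) : R :=
  mpoly.meval (fun i => v 0 i) p.

Definition e_vec {M} : 'rV[R]_M := const_mx 1.

Definition homog_poly_on_sym n (N : nat) (F : 'M[R]_n -> R) : Prop :=
  exists q : mpoly.mpoly (n * n) R,
    q \is N.-homog /\ forall A, symmx A -> F A = mx_eval q A.

Definition real_rooted (g : R -> R) : Prop :=
  exists (c : R) (s : seq R), forall t, g t = c * \prod_(x <- s) (t - x).

Definition garding_cone n (F : 'M[R]_n -> R) : set 'M[R]_n :=
  connected_component [set A | symmx A /\ F A != 0] 1%:M.

Definition GD_poly n (N : nat) (F : 'M[R]_n -> R) : Prop :=
  [/\ homog_poly_on_sym N F,
      0 < F 1%:M,
      (forall A, symmx A -> real_rooted (fun t => F (t%:M + A)))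
    & (forall A, posdef A -> garding_cone F A)].

Definition orthogonal_mx {n} (g : 'M[R]_n) : Prop := g *m g^T = 1%:M.

Definition real_invariant n (F : 'M[R]_n -> R) : Prop :=
  forall g A, orthogonal_mx g -> symmx A -> F (g *m A *m g^T) = F A.

Definition universal_GD (M N : nat) (p : mpoly.mpoly M R) : Prop :=
  [/\ p \is N.-homog,
      p \is mpoly.symmetric /\ 0 < rv_eval p e_vec,
      (forall m, 0 <= mpoly.mcoeff m p),
      (exists k : R, 0 < k /\ forall j, rv_eval (mpoly.mderiv j p) e_vec = k)
    & (forall lam : 'rV[R]_M, real_rooted (fun t => rv_eval p (t *: e_vec + lam)))].

Definition garding_cone_p M (p : mpoly.mpoly M R) : set 'rV[R]_M :=
  connected_component [set lam | rv_eval p lam != 0] e_vec.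

End GardingDirichlet.

Arguments e_vec {R M}.

(* Main.v *)
Require Import Defs.
From HB Require Import structures.
From mathcomp Require Import all_boot all_order all_algebra.
From mathcomp Require Import mpoly.
From mathcomp Require Import perm.
From mathcomp Require Import boolp classical_sets reals topology normedtype.
From mathcomp Require Import matrix_topology.
Import Order.TTheory GRing.Theory Num.Theory.
Import numFieldNormedType.Exports.
Local Open Scope ring_scope.
Local Open Scope classical_set_scope.

Set Implicit Arguments. Unset Strict Implicit.
Section Alg.
Variable R : realType.

Definition pts K : 'rV[R]_K := \row_(j < K) (j.+1)%:R.
Definition VdW K := invmx (Vandermonde K (pts K)).

Lemma vander_unit K : Vandermonde K (pts K) \in unitmx.
Proof.
rewrite unitmxE det_Vandermonde unitfE.
apply/prodf_neq0 => i _; apply/prodf_neq0 => j ij.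
rewrite !mxE subr_eq0 eq_sym eqr_nat eqSS; apply/eqP => /val_inj h.
by move: ij; rewrite h ltnn.
Qed.

Lemma interp K (pp : {poly R}) : (size pp <= K)%N -> forall k : 'I_K,
  pp`_k = (\row_j pp.[pts K 0 j] *m VdW K) 0 k.
Proof.
move=> hs k.
set c : 'rV[R]_K := \row_k pp`_k.
have -> : \row_j pp.[pts K 0 j] = c *m Vandermonde K (pts K).
  apply/rowP => j; rewrite !mxE (horner_coef_wide _ hs).
  by apply: eq_bigr => i _; rewrite !mxE.
by rewrite /VdW mulmxK ?vander_unit // mxE.
Qed.

Lemma poly_fun_eq (p q : {poly R}) : (forall x, p.[x] = q.[x]) -> p = q.
Proof.
move=> h; apply/polyP => k.
pose K := maxn (size p) (size q).
case: (ltnP k K) => hk.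
  rewrite (@interp K p (leq_maxl _ _) (Ordinal hk)).
  rewrite (@interp K q (leq_maxr _ _) (Ordinal hk)) /=.
  by congr ((_ *m _) 0 _); apply/rowP => j; rewrite !mxE h.
by rewrite !nth_default // (leq_trans _ hk) // ?leq_maxl ?leq_maxr.
Qed.

End Alg.
Section A.
Variable R : realType.

Lemma meval_msym K (p : mpoly.mpoly K R) (s : 'S_K) (w : 'I_K -> R) :
  mpoly.meval w (mpoly.msym s p) = mpoly.meval (fun i => w (s i)) p.
Proof.
have E := mpolyE p; rewrite [in RHS]E [in LHS]E.
rewrite (raddf_sum (msym s)) !raddf_sum /=.
apply: eq_bigr => m _; rewrite msymZ !mevalZ msymX !mevalX; congr (_ * _).
rewrite (reindex_inj (@perm_inj _ s)) /=; apply: eq_bigr => i _.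
by rewrite mnmE permK.
Qed.

Lemma meval_homog K d (p : mpoly.mpoly K R) (r : R) (w : 'I_K -> R) :
  p \is d.-homog -> mpoly.meval (fun i => r * w i) p = r ^+ d * mpoly.meval w p.
Proof.
move=> /dhomogP hp; rewrite !mevalE mulr_sumr; rewrite !big_seq.
apply: eq_bigr => m /hp <-; rewrite mulrCA; congr (_ * _).
rewrite (eq_bigr (fun i => r ^+ m i * w i ^+ m i)); last by move=> i _; rewrite exprMn.
by rewrite big_split /= prodrXr mdegE.
Qed.

End A.
Section B.
Variable R : realType.
Lemma sym_eval K (p : mpoly.mpoly K R) : p \is mpoly.symmetric ->
  forall u v : 'rV[R]_K,
  (forall t, \prod_(j < K) (t + u 0 j) = \prod_(j < K) (t + v 0 j)) ->
  rv_eval p u = rv_eval p v.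
Proof.
move=> /issymP hs u v h.
pose su := [tuple - u 0 j | j < K]; pose sv := [tuple - v 0 j | j < K].
have hp : \prod_(x <- su) ('X - x%:P) = \prod_(x <- sv) ('X - x%:P).
  apply: poly_fun_eq => t; rewrite !horner_prod.
  rewrite /su /sv /= !big_map.
  under eq_bigr do rewrite hornerXsubC opprK.
  under [RHS]eq_bigr do rewrite hornerXsubC opprK.
  exact: h.
have /tuple_permP [s /val_inj hsv] := prod_XsubC_eq hp.
have hi i : u 0 i = v 0 (s i).
  have := congr1 (fun t => tnth t i) hsv; rewrite /= !tnth_mktuple.
  by move/eqP; rewrite eqr_opp => /eqP.
rewrite /rv_eval -{2}(hs s) meval_msym; apply: meval_eq => i; exact: hi.
Qed.
End B.
Section Cont.
Variable R : realType.

Lemma cont_sum (T : topologicalType) (I : Type) (r : seq I) (f : I -> T -> R) :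
  (forall i, continuous (f i)) -> continuous (fun x => \sum_(i <- r) f i x).
Proof.
move=> hf; elim: r => [|i r ih].
  under eq_fun do rewrite big_nil; exact: cst_continuous.
under eq_fun do rewrite big_cons.
move=> x; apply: (@continuousD _ R^o T (f i) (fun x => \sum_(j <- r) f j x)).
  exact: hf. exact: ih.
Qed.

Lemma cont_prod (T : topologicalType) (I : Type) (r : seq I) (f : I -> T -> R) :
  (forall i, continuous (f i)) -> continuous (fun x => \prod_(i <- r) f i x).
Proof.
move=> hf; elim: r => [|i r ih].
  under eq_fun do rewrite big_nil; exact: cst_continuous.
under eq_fun do rewrite big_cons.
move=> x; apply: (@continuousM R T (f i) (fun x => \prod_(j <- r) f j x)).
  exact: hf. exact: ih.
Qed.

End Cont.

Section Cont2.
Variable R : realType.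

Lemma cont_meval (T : topologicalType) K (p : mpoly.mpoly K R) (w : T -> 'I_K -> R) :
  (forall i, continuous (fun x => w x i)) -> continuous (fun x => mpoly.meval (w x) p).
Proof.
move=> hw; under eq_fun do rewrite mevalE.
apply: cont_sum => m x.
apply: (@continuousM R T (fun _ => p@_m)); first exact: cst_continuous.
move: x; apply: cont_prod => i.
elim: (m i) => [|k ih].
  under eq_fun do rewrite expr0; exact: cst_continuous.
under eq_fun do rewrite exprS.
move=> x; apply: (@continuousM R T (fun x => w x i)); [exact: hw | exact: ih].
Qed.

Lemma cont_mx_eval n (q : mpoly.mpoly (n * n) R) : continuous (@mx_eval R n q).
Proof.
apply: cont_meval => k.
case/mxvec_indexP: k => i j.
under eq_fun do rewrite mxvecE.
exact: coord_continuous.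
Qed.

Lemma cont_rv_eval M (p : mpoly.mpoly M R) : continuous (@rv_eval R M p).
Proof. apply: cont_meval => k; exact: coord_continuous. Qed.

End Cont2.
Section PolyPos.
Variable R : realType.

Lemma prod_coef_pos (s : seq R) : (forall x, x \in s -> 0 < x) ->
  forall k, 0 <= (\prod_(x <- s) ('X - (- x)%:P))`_k /\
    ((k <= size s)%N -> 0 < (\prod_(x <- s) ('X - (- x)%:P))`_k).
Proof.
elim: s => [|x s ih] hs k.
  rewrite big_nil coef1; case: k => [|k] //=; split => //; exact: ler01.
have hx : 0 < x by apply: hs; rewrite mem_head.
have {}ih := ih (fun y hy => hs y (@mem_behead _ (x :: s) y hy)).
rewrite big_cons polyCN opprK mulrDl coefD coefXM coefCM.
have [h1 h2] := ih k.
case: k h1 h2 => [|k] h1 h2 /=.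
  rewrite add0r; split; first by apply: mulr_ge0 => //; exact: ltW.
  by move=> _; apply: mulr_gt0 => //; exact: h2.
have [h3 h4] := ih k.
split; first by apply: addr_ge0 => //; apply: mulr_ge0 => //; exact: ltW.
move=> hk; apply: ltr_pwDl; last by apply: mulr_ge0 => //; exact: ltW.
exact: h4.
Qed.

End PolyPos.

Section Gard.
Variables (R : realType) (V : normedModType R).

Lemma garding_abs (S : set V) (e : V) (P Q : V -> R) (N : nat) (L : V -> 'I_N -> R) :
  S e -> (forall x t, S x -> S (t *: e + x)) -> (forall x r, S x -> S (r *: x)) ->
  0 < P e ->
  (forall x t, S x -> P (t *: e + x) = P e * \prod_(j < N) (t + L x j)) ->
  (forall x r, S x -> 0 < r -> P (r *: x) = r ^+ N * P x) ->
  (forall x, S x -> P x = Q x) -> continuous Q ->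
  connected_component [set x | S x /\ P x != 0] e =
    [set x | S x /\ forall j, 0 < L x j].
Proof.
move=> Se Ssh Ssc Pe0 Pfac Phom PQ Qc.
pose Pi x := \prod_(c <- [seq - L x j | j <- enum 'I_N]) ('X - c%:P).
have PiH x t : (Pi x).[t] = \prod_(j < N) (t + L x j).
  rewrite /Pi horner_prod big_map enumT.
  by under eq_bigr do rewrite hornerXsubC opprK.
have PiS x : size (Pi x) = N.+1.
  by rewrite /Pi size_prod_XsubC size_map size_enum_ord.
have PiL x : (Pi x)`_N = 1.
  have /monicP := monic_prod_XsubC [seq - L x j | j <- enum 'I_N] xpredT id.
  by rewrite lead_coefE size_prod_XsubC size_map size_enum_ord.
pose pp x := P e *: Pi x.
have ppH x t : S x -> (pp x).[t] = P (t *: e + x).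
  by move=> Sx; rewrite hornerZ PiH Pfac.
have ppS x : (size (pp x) <= N.+1)%N by rewrite -(PiS x) size_scale_leq.
pose a (k : 'I_N.+1) x := (\row_j Q ((@pts R N.+1) 0 j *: e + x) *m VdW R N.+1) 0 k.
have aE k x : S x -> a k x = (pp x)`_k.
  move=> Sx; rewrite (interp (ppS x)) /a; congr ((_ *m _) 0 _).
  by apply/rowP => j; rewrite !mxE ppH // PQ //; apply: Ssh.
have ac k : continuous (a k).
  have -> : a k = fun x => \sum_j Q ((@pts R N.+1) 0 j *: e + x) * VdW R N.+1 j k.
    by apply/funext => x; rewrite /a mxE; apply: eq_bigr => j _; rewrite mxE.
  apply: cont_sum => j x.
  apply: (@continuousM R V (fun x => Q ((@pts R N.+1) 0 j *: e + x)) (fun _ => _)); last first.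
    exact: cst_continuous.
  apply: (@continuous_comp V V R (fun x => (@pts R N.+1) 0 j *: e + x) Q); last exact: Qc.
  apply: (@continuousD R V V (fun _ => _) id); first exact: cst_continuous.
  by [].
have hGe : forall j, 0 < L e j.
  move=> j; rewrite ltNge; apply/negP => hle.
  pose t := - L e j.
  have ht : 0 <= t by rewrite /t oppr_ge0.
  have h0 : P (t *: e + e) = 0.
    by rewrite Pfac // (bigD1 j) //= /t addNr mul0r mulr0.
  have : P (t *: e + e) = (t + 1) ^+ N * P e.
    rewrite -{2}(scale1r e) -scalerDl Phom //.
    by apply: ltr_wpDl ht ltr01.
  rewrite h0 => /esym /eqP; rewrite mulf_eq0 expf_eq0 (gt_eqF Pe0) orbF.
  by rewrite (gt_eqF (ltr_wpDl ht ltr01)) andbF.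
have hGO x : S x -> (forall j, 0 < L x j) -> forall k, 0 < a k x.
  move=> Sx Gx k; rewrite aE // /pp coefZ; apply: mulr_gt0 => //.
  have := (@prod_coef_pos R [seq L x j | j <- enum 'I_N] _ k).2.
  rewrite /Pi !big_map size_map size_enum_ord; apply; last by rewrite -ltnS.
  by move=> z /mapP [j _ ->].
have hClG x : S x -> P x != 0 -> (forall k, 0 <= a k x) -> forall j, 0 < L x j.
  move=> Sx Px ha j; rewrite ltNge; apply/negP => hle.
  pose t := - L x j.
  have ht : 0 <= t by rewrite /t oppr_ge0.
  have h0 : (pp x).[t] = 0.
    by rewrite ppH // Pfac // (bigD1 j) //= /t addNr mul0r mulr0.
  move: ht; rewrite le0r => /orP [/eqP t0|tpos].
    by move: h0; rewrite ppH // t0 scale0r add0r; apply/eqP.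
  move: h0; rewrite (horner_coef_wide t (ppS x)) (bigD1 ord_max) //=.
  apply/eqP; rewrite gt_eqF //.
  have h1 : 0 < (pp x)`_N * t ^+ N.
    by rewrite /pp coefZ PiL mulr1; apply: mulr_gt0 => //; apply: exprn_gt0.
  apply: (lt_le_trans h1); rewrite lerDl; apply: sumr_ge0 => k _.
  by apply: mulr_ge0; [rewrite -aE //; exact: ha | apply: exprn_ge0; exact: ltW].
rewrite eqEsubset; split.
  move=> y [C [Ce Csub Cc] Cy].
  pose G := [set x | forall j, 0 < L x j].
  suff hCG : C `&` G = C.
    split; first by have [] := Csub y Cy.
    by have [] : (C `&` G) y by rewrite hCG.
  apply: Cc.
  - by exists e; split => //.
  - exists [set x | forall k, 0 < a k x].
      rewrite openE => x Ox; apply: filter_forall => k.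
      apply: (ac k x [set z | 0 < z]); apply: open_nbhs_nbhs; split; first exact: open_gt.
      exact: Ox.
    apply/seteqP; split => x [Cx hx]; split => //.
      by apply: hGO => //; have [] := Csub x Cx.
    have [Sx Px] := Csub x Cx; apply: hClG => // k; exact: ltW.
  - exists [set x | forall k, 0 <= a k x].
      have -> : [set x | forall k, 0 <= a k x] =
          \bigcap_(k in setT) (a k @^-1` [set z | 0 <= z]).
        by apply/seteqP; split => x hx k; [move=> _; exact: hx | exact: hx].

      apply: closed_bigI => k _; apply: preimage_closed; last exact: closed_ge.
      by move=> x _; exact: ac.
    apply/seteqP; split => x [Cx hx]; split => //.
      by move=> k; apply: ltW; apply: hGO => //; have [] := Csub x Cx.
    by have [Sx Px] := Csub x Cx; apply: hClG.
move=> y [Sy Gy].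
pose f := fun r : R => r *: y + (1 - r) *: e.
exists (f @` `[0, 1]); last first.
  by exists 1; [rewrite /= in_itv /= ler01 lexx | rewrite /f scale1r subrr scale0r addr0].
split.
- by exists 0; [rewrite /= in_itv /= ler01 lexx | rewrite /f scale0r add0r subr0 scale1r].
- move=> z [r]; rewrite /= in_itv /= => /andP [r0 r1] <-.
  move: r0; rewrite le0r => /orP [/eqP ->|rpos].
    by rewrite /f scale0r add0r subr0 scale1r; split => //; rewrite gt_eqF.
  have E : f r = r *: (((1 - r) / r) *: e + y).
    by rewrite /f scalerDr scalerA [r * _]mulrC divfK ?gt_eqF // addrC.
  rewrite E; split; first by apply: Ssc; apply: Ssh.
  rewrite Phom //; last exact: Ssh.
  rewrite Pfac // gt_eqF //; apply: mulr_gt0; first exact: exprn_gt0.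
  apply: mulr_gt0 => //; apply: prodr_gt0 => j _.
  apply: (lt_le_trans (Gy j)); rewrite lerDr.
  by apply: divr_ge0; [rewrite subr_ge0 | exact: ltW].
- apply: connected_continuous_connected; first exact: segment_connected.
  apply: continuous_subspaceT => r.
  apply: (@continuousD R V R (fun r => r *: y) (fun r => (1 - r) *: e)).
    by apply: (@continuousZr_tmp R V R id y r).
  apply: (@continuousZr_tmp R V R (fun r => 1 - r) e r).
  apply: (@continuousB R R^o R (fun _ => 1) id r); first exact: cst_continuous.
  by [].
Qed.
End Gard.
Section Mx.
Variable R : realType.

Lemma symmxZ n (A : 'M[R]_n) r : symmx A -> symmx (r *: A).
Proof. by rewrite /symmx => h; rewrite linearZ /= h. Qed.

Lemma symmxD n (A B : 'M[R]_n) : symmx A -> symmx B -> symmx (A + B).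
Proof. by rewrite /symmx => h1 h2; rewrite linearD /= h1 h2. Qed.

Lemma symmxC n (r : R) : symmx (r%:M : 'M[R]_n).
Proof. by rewrite /symmx tr_scalar_mx. Qed.

Lemma symmx_conj n (g A : 'M[R]_n) : symmx A -> symmx (g *m A *m g^T).
Proof. by rewrite /symmx => h; rewrite !trmx_mul trmxK h mulmxA. Qed.

Lemma mx_eval_homog n d (q : mpoly.mpoly (n * n) R) r (A : 'M[R]_n) :
  q \is d.-homog -> mx_eval q (r *: A) = r ^+ d * mx_eval q A.
Proof.
move=> hq; rewrite /mx_eval -meval_homog //; apply: meval_eq => i.
by rewrite linearZ /= mxE.
Qed.

Lemma rv_eval_homog M d (p : mpoly.mpoly M R) r (v : 'rV[R]_M) :
  p \is d.-homog -> rv_eval p (r *: v) = r ^+ d * rv_eval p v.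
Proof.
move=> hq; rewrite /rv_eval -meval_homog //; apply: meval_eq => i.
by rewrite mxE.
Qed.

Lemma rv_eval_pos M (p : mpoly.mpoly M R) (v : 'rV[R]_M) :
  (forall m, 0 <= p@_m) -> p != 0 -> (forall i, 0 < v 0 i) -> 0 < rv_eval p v.
Proof.
move=> hc hp hv; rewrite /rv_eval mevalE.
have hm : forall m, m \in msupp p -> 0 < p@_m * \prod_i v 0 i ^+ m i.
  move=> m hm; apply: mulr_gt0.
    by rewrite lt0r -mcoeff_msupp hm hc.
  by apply: prodr_gt0 => i _; apply: exprn_gt0.
have : msupp p != [::] by rewrite msupp_eq0.
have : {subset msupp p <= msupp p} by [].
elim: {1 3 4}(msupp p) => [|m r ih] // hsub _.
rewrite big_cons; apply: ltr_wpDr.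
  apply: sumr_ge0 => m' _; apply: mulr_ge0 => //.
  by apply: prodr_ge0 => i _; apply: exprn_ge0; apply: ltW.
by apply: hm; apply: hsub; rewrite mem_head.
Qed.

End Mx.
Section PolyPF.
Variable R : realType.

Definition shiftT n (a : R) : (n * n).-tuple (mpoly.mpoly (n * n) R) :=
  [tuple 'X_i + (a * mxvec (1%:M : 'M[R]_n) 0 i)%:MP | i < n * n].

Lemma eval_shift n (q : mpoly.mpoly (n * n) R) a (A : 'M[R]_n) :
  mx_eval (q \mPo shiftT n a) A = mx_eval q (a%:M + A).
Proof.
rewrite /mx_eval comp_mpoly_meval; apply: meval_eq => i.
rewrite tnth_mktuple mevalD mevalXU mevalC.
have -> : a%:M + A = a *: (1%:M : 'M[R]_n) + A by rewrite scalemx1.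
by rewrite linearD linearZ /= !mxE addrC.
Qed.


Lemma coef_poly_exists n M (F : 'M[R]_n -> R) (lamF : 'M[R]_n -> 'rV[R]_M)
    (qF : mpoly.mpoly (n * n) R) :
  (forall A, symmx A -> F A = mx_eval qF A) -> 0 < F 1%:M ->
  (forall A, symmx A -> forall t : R,
      F (t%:M + A) = F 1%:M * \prod_(j < M) (t + lamF A 0 j)) ->
  forall k, (k <= M)%N -> exists c : mpoly.mpoly (n * n) R,
    forall A, symmx A -> mx_eval c A = mpoly.meval (fun i => lamF A 0 i) (mpoly.mesym M R k).
Proof.
move=> FqF F10 Ffac k hk.
pose k' : 'I_M.+1 := inord (M - k).
exists (\sum_(j < M.+1) ((VdW R M.+1 j k') / F 1%:M) *: (qF \mPo shiftT n ((@pts R M.+1) 0 j))).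
move=> A sA.
pose cs := [tuple - lamF A 0 j | j < M].
pose pp := F 1%:M *: \prod_(c <- cs) ('X - c%:P).
have ppH t : pp.[t] = F (t%:M + A).
  rewrite hornerZ horner_prod Ffac //; congr (_ * _).
  rewrite /= big_map enumT.
  by under eq_bigr do rewrite hornerXsubC opprK.
have ppS : (size pp <= M.+1)%N.
  by rewrite (leq_trans (size_scale_leq _ _)) // size_prod_XsubC size_tuple.
have := interp ppS k'.
rewrite {1}/pp coefZ /k' inordK ?ltnS ?leq_subr //.
have := mroots_coeff cs (inord k); rewrite inordK ?ltnS // => ->.
have -> : (mpoly.mesym M R k).@[tnth cs] = (-1) ^+ k * (mpoly.meval (fun i => lamF A 0 i) (mpoly.mesym M R k)).
  rewrite -meval_homog; last exact: dhomog_mesym.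
  by apply: meval_eq => i; rewrite tnth_mktuple mulN1r.
rewrite [X in F 1%:M * X]mulrA -exprMn mulrNN mulr1 expr1n mul1r => hpp.
have F1n : F 1%:M != 0 by rewrite gt_eqF.
rewrite -(mulKf F1n (mpoly.meval _ (mpoly.mesym M R k))) hpp.
rewrite /mx_eval raddf_sum /= mxE mulr_sumr; apply: eq_bigr => j _.
rewrite mevalZ -/(mx_eval _ A) eval_shift -FqF; last first.
  by apply: symmxD => //; rewrite /symmx tr_scalar_mx.
rewrite !mxE ppH.
by rewrite mulrC mulrA mulrC.
Qed.

End PolyPF.

Section PolyPF2.
Variable R : realType.

Lemma mx_eval_sum n k (q : 'I_k -> mpoly.mpoly (n * n) R) (A : 'M[R]_n) :
  mx_eval (\sum_(i < k) q i) A = \sum_(i < k) mx_eval (q i) A.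
Proof. by rewrite /mx_eval raddf_sum. Qed.

Lemma poly_PF n M N (F : 'M[R]_n -> R) (lamF : 'M[R]_n -> 'rV[R]_M)
    (qF : mpoly.mpoly (n * n) R) (p : mpoly.mpoly M R) :
  (forall A, symmx A -> F A = mx_eval qF A) -> 0 < F 1%:M ->
  (forall A, symmx A -> forall t : R,
      F (t%:M + A) = F 1%:M * \prod_(j < M) (t + lamF A 0 j)) ->
  p \is mpoly.symmetric ->
  (forall A r, symmx A -> 0 < r ->
     rv_eval p (lamF (r *: A)) = r ^+ N * rv_eval p (lamF A)) ->
  homog_poly_on_sym N (fun A => rv_eval p (lamF A)).
Proof.
move=> FqF F10 Ffac psym PFhom.
have hc : forall i : 'I_M, exists c : mpoly.mpoly (n * n) R,
    forall A, symmx A -> mx_eval c A = mpoly.meval (fun i => lamF A 0 i) (mpoly.mesym M R i.+1).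
  by move=> i; apply: (coef_poly_exists FqF F10 Ffac); exact: ltn_ord.
pose c i := projT1 (cid (hc i)).
have cE i A : symmx A -> mx_eval (c i) A = mpoly.meval (fun i => lamF A 0 i) (mpoly.mesym M R i.+1).
  exact: (projT2 (cid (hc i))).
have [t [ht _]] := sym_fundamental psym.
pose Q0 := t \mPo [tuple c i | i < M].
have Q0E A : symmx A -> mx_eval Q0 A = rv_eval p (lamF A).
  move=> sA; rewrite /mx_eval comp_mpoly_meval /rv_eval -ht comp_mpoly_meval.
  by apply: meval_eq => i; rewrite !tnth_mktuple -cE.
exists (pihomog mdeg N Q0); split; first exact: pihomogP.
move=> A sA.
pose D := (msize Q0 + N.+1)%N.
have hD : (msize Q0 <= D)%N by rewrite leq_addr.
have ND : (N < D)%N by rewrite /D addnS ltnS leq_addl.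
pose b d := mx_eval (pihomog mdeg d Q0) A.
pose g := \poly_(d < D) (b d - (d == N)%:R * rv_eval p (lamF A)).
have gH r : 0 < r -> g.[r] = 0.
  move=> r0; rewrite horner_poly.
  under eq_bigr do rewrite mulrBl.
  rewrite sumrB.
  have -> : \sum_(i < D) b i * r ^+ i = mx_eval Q0 (r *: A).
    rewrite [in RHS](pihomog_partitionE hD) mx_eval_sum; apply: eq_bigr => d _.
    by rewrite (mx_eval_homog _ _ (pihomogP mdeg d Q0)) mulrC.
  rewrite Q0E; last exact: symmxZ.
  rewrite PFhom // (bigD1 (Ordinal ND)) //.
  rewrite eqxx mul1r big1 ?addr0.
  - by rewrite Monoid.simpm mulrC subrr.
  move=> i /negbTE.
  by rewrite -val_eqE => ->; rewrite mul0r mul0r.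
have gS : (size g <= D)%N by apply: size_poly.
have := interp gS (Ordinal ND).
rewrite coef_poly ND eqxx mul1r.
have -> : \row_j g.[(@pts R D) 0 j] = 0.
  by apply/rowP => j; rewrite !mxE gH // ltr0n.
by rewrite mul0mx mxE => /eqP; rewrite subr_eq0 => /eqP <-.
Qed.

End PolyPF2.
Unset Implicit Arguments. Set Strict Implicit.
Theorem theorem7p4 (R : realType) (n M N : nat)
  (F : 'M[R]_n -> R) (lamF : 'M[R]_n -> 'rV[R]_M)
  (p : mpoly.mpoly M R) (Lam : 'rV[R]_M -> 'rV[R]_N) :
  GD_poly M F ->
  (forall A, symmx A -> forall t : R,
      F (t%:M + A) = F 1%:M * \prod_(j < M) (t + lamF A 0 j)) ->
  universal_GD N p ->
  (forall (lam : 'rV[R]_M) (t : R),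
      rv_eval p (t *: e_vec + lam) = rv_eval p e_vec * \prod_(j < N) (t + Lam lam 0 j)) ->
  let PF := fun A : 'M[R]_n => rv_eval p (lamF A) in
  [/\ GD_poly N PF,
      (forall A, symmx A -> forall t : R,
          PF (t%:M + A) = PF 1%:M * \prod_(j < N) (t + Lam (lamF A) 0 j)),
      garding_cone PF = [set A | symmx A /\ garding_cone_p p (lamF A)]
    & (real_invariant F -> real_invariant PF)].
Proof.
move=> [[qF [hqF FqF]] FI0 _ Fcone] Ffac [hp [psym pe0] pcoef _ _] pfac PF.
have FI0' : F 1%:M != 0 by rewrite gt_eqF.
have Lgen : forall A (u : 'rV[R]_M), symmx A ->
    (forall s, F (s%:M + A) = F 1%:M * \prod_(j < M) (s + u 0 j)) -> PF A = rv_eval p u.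
  move=> A u sA hu; apply: sym_eval => // s.
  by apply: (mulfI FI0'); rewrite -Ffac // hu.
have Fhom : forall A r, symmx A -> F (r *: A) = r ^+ M * F A.
  move=> A r sA; rewrite (FqF (r *: A)); last exact: symmxZ.
  by rewrite (FqF A) // (mx_eval_homog _ _ hqF).
have PFI : PF 1%:M = rv_eval p e_vec.
  apply: Lgen; first exact: symmxC.
  move=> s; have -> : s%:M + 1%:M = (s + 1) *: (1%:M : 'M[R]_n).
    by rewrite scalemx1 raddfD.
  rewrite Fhom; last exact: symmxC.
  rewrite mulrC; congr (_ * _).
  by rewrite (eq_bigr (fun _ => s + 1)) ?prodr_const ?card_ord // => j _; rewrite mxE.
have PFsh : forall A t, symmx A -> PF (t%:M + A) = rv_eval p (t *: e_vec + lamF A).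
  move=> A t sA; apply: Lgen; first by apply: symmxD => //; exact: symmxC.
  move=> s; rewrite addrA -raddfD /= Ffac //; congr (_ * _).
  by apply: eq_bigr => j _; rewrite !mxE mulr1 addrA.
have PFfac : forall A, symmx A -> forall t : R,
    PF (t%:M + A) = PF 1%:M * \prod_(j < N) (t + Lam (lamF A) 0 j).
  by move=> A sA t; rewrite PFsh // pfac PFI.
have PFhom : forall A r, symmx A -> 0 < r -> PF (r *: A) = r ^+ N * PF A.
  move=> A r sA r0; rewrite -(rv_eval_homog _ _ hp); apply: Lgen; first exact: symmxZ.
  move=> s; have -> : s%:M + r *: A = r *: ((s / r)%:M + A).
    by rewrite scalerDr scale_scalar_mx mulrC divfK ?gt_eqF.
  rewrite Fhom; last by apply: symmxD => //; exact: symmxC.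
  rewrite Ffac // mulrCA; congr (_ * _).
  have -> : r ^+ M = \prod_(j < M) r by rewrite prodr_const card_ord.
  rewrite -big_split /=.
  by apply: eq_bigr => j _; rewrite !mxE mulrDr mulrC divfK ?gt_eqF.
have PFinv : real_invariant F -> real_invariant PF.
  move=> Finv g A og sA; apply: Lgen; first exact: symmx_conj.
  move=> s; rewrite -Ffac // -[RHS](Finv g (s%:M + A)) //; last first.
    by apply: symmxD => //; exact: symmxC.
  by rewrite mulmxDr mulmxDl mul_mx_scalar -scalemxAl og scalemx1.
have [q [hq qE]] := poly_PF FqF FI0 Ffac psym PFhom.
have PFI0 : 0 < PF 1%:M by rewrite PFI.
have GcPF : garding_cone PF = [set A | symmx A /\ forall j, 0 < Lam (lamF A) 0 j].
  rewrite /garding_cone.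
  apply: (@garding_abs R 'M[R]_n (@symmx R n) 1%:M PF (mx_eval q) N (fun A j => Lam (lamF A) 0 j)).
  - exact: symmxC.
  - by move=> x t sx; rewrite scalemx1; apply: symmxD => //; exact: symmxC.
  - by move=> x r sx; exact: symmxZ.
  - exact: PFI0.
  - by move=> x t sx; rewrite scalemx1 PFfac.
  - exact: PFhom.
  - exact: qE.
  - exact: cont_mx_eval.
have GF : garding_cone F = [set A | symmx A /\ forall j, 0 < lamF A 0 j].
  rewrite /garding_cone.
  apply: (@garding_abs R 'M[R]_n (@symmx R n) 1%:M F (mx_eval qF) M (fun A j => lamF A 0 j)).
  - exact: symmxC.
  - by move=> x t sx; rewrite scalemx1; apply: symmxD => //; exact: symmxC.
  - by move=> x r sx; exact: symmxZ.
  - exact: FI0.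
  - by move=> x t sx; rewrite scalemx1 Ffac.
  - by move=> x r sx _; exact: Fhom.
  - exact: FqF.
  - exact: cont_mx_eval.
have Gp : garding_cone_p p = [set v | forall j, 0 < Lam v 0 j].
  rewrite /garding_cone_p.
  have -> : [set lam | rv_eval p lam != 0] = [set x | setT x /\ rv_eval p x != 0].
    apply/seteqP; split => x /=; first by move=> h; split.
    by case.
  rewrite (@garding_abs R 'M[R]_(1, M) setT e_vec (rv_eval p) (rv_eval p) N (fun v j => Lam v 0 j)) //.
  - apply/seteqP; split => x /=; first by case.
    by move=> h; split.
  - by move=> x r _ _; rewrite (rv_eval_homog _ _ hp).
  - exact: cont_rv_eval.
have pn0 : p != 0.
  by apply/eqP => p0; move: pe0; rewrite p0 /rv_eval meval0 ltxx.
split => //.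
- split => //.
  + by exists q.
  + move=> A sA; exists (PF 1%:M), [seq - Lam (lamF A) 0 j | j <- enum 'I_N] => t.
    rewrite PFfac // big_map enumT.
    by congr (_ * _); apply: eq_bigr => j _; rewrite opprK.
  + move=> A /Fcone; rewrite GF => -[sA hpos]; rewrite GcPF; split => // j.
    rewrite ltNge; apply/negP => hle.
    pose t := - Lam (lamF A) 0 j.
    have ht : 0 <= t by rewrite /t oppr_ge0.
    have := pfac (lamF A) t.
    rewrite [in RHS](bigD1 j) //= /t addNr mul0r mulr0.
    apply/eqP; rewrite gt_eqF //; apply: rv_eval_pos => //.
    by move=> i; rewrite !mxE mulr1; apply: ltr_wpDl ht (hpos i).
- rewrite GcPF; apply/seteqP; split => A [sA h]; split => //.
    by rewrite Gp.
  by move: h; rewrite Gp.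
Qed.
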